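(* Let $\alpha<\beta$ with $\alpha+\beta>0$. As $\tau\to\infty$: (i) $\lim \tau I_2=\int_{-\alpha}^{\beta}\frac{1}{\sqrt{\zeta^2+4}}\sqrt{\frac{\alpha+\zeta}{\beta-\zeta}}\,d\zeta$ and $\lim\tau J_2=\int_{-\alpha}^{\beta}\frac{1}{\sqrt{\zeta^2+4}}\sqrt{\frac{\beta-\zeta}{\alpha+\zeta}}\,d\zeta$, and $\lim_{\tau\to\infty}\tau I_2<\lim_{\tau\to\infty}\tau J_2$; (ii) $\lim\tau(I_1-J_1)=-\int_{-\infty}^{-\alpha}\frac{\alpha+\beta}{\sqrt{\zeta^2+4}\sqrt{\beta-\zeta}\sqrt{-\alpha-\zeta}}\,d\zeta$ and $\lim\tau(I_3-J_3)=\int_{\beta}^{\infty}\frac{\alpha+\beta}{\sqrt{\zeta^2+4}\sqrt{\zeta-\beta}\sqrt{\zeta+\alpha}}\,d\zeta$, both finite and nonzero; (iii) $\tau(J_1+J_3)\to+\infty$.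
   Context: For real $\alpha,\beta,\tau$ with $-\tau<-\alpha<\beta<\tau$ put $g_1(\zeta)=|\zeta+\alpha|^{1/2}|\zeta-\beta|^{-1/2}(\tau^2-\zeta^2)^{-1/2}(\zeta^2+4)^{-1/2}$ and $g_2(\zeta)=|\zeta+\alpha|^{-1/2}|\zeta-\beta|^{1/2}(\tau^2-\zeta^2)^{-1/2}(\zeta^2+4)^{-1/2}$, and $I_1=\int_{-\tau}^{-\alpha}g_1$, $I_2=\int_{-\alpha}^{\beta}g_1$, $I_3=\int_{\beta}^{\tau}g_1$, $J_1,J_2,J_3$ likewise with $g_2$ (convergent improper integrals). Under $\alpha=a-1/a$, $\beta=b-1/b$, $\tau=t-1/t$ these coincide with the period integrals of the surfaces in class $\mathcal O$ with parameters $a,b,t$. *)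

(* Defs.v *)
From Stdlib Require Export Reals Lra.
Open Scope R_scope.

Definition improper_int (f : R -> R) (a b L : R) : Prop :=
  (forall c d, a < c -> c <= d -> d < b -> inhabited (Riemann_integrable f c d)) /\
  forall eps, eps > 0 -> exists delta, delta > 0 /\
    forall c d (pr : Riemann_integrable f c d),
      a < c -> c < a + delta -> b - delta < d -> d < b -> c <= d ->
      Rabs (RiemannInt pr - L) < eps.

Definition improper_int_ninf (f : R -> R) (b L : R) : Prop :=
  (forall c d, c <= d -> d < b -> inhabited (Riemann_integrable f c d)) /\
  forall eps, eps > 0 -> exists M delta, delta > 0 /\
    forall c d (pr : Riemann_integrable f c d),
      c < M -> b - delta < d -> d < b -> c <= d ->
      Rabs (RiemannInt pr - L) < eps.

Definition improper_int_pinf (f : R -> R) (a L : R) : Prop :=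
  (forall c d, a < c -> c <= d -> inhabited (Riemann_integrable f c d)) /\
  forall eps, eps > 0 -> exists M delta, delta > 0 /\
    forall c d (pr : Riemann_integrable f c d),
      a < c -> c < a + delta -> M < d -> c <= d ->
      Rabs (RiemannInt pr - L) < eps.

Definition tends_at_pinf (F : R -> R) (L : R) : Prop :=
  forall eps, eps > 0 -> exists T, forall x, x > T -> Rabs (F x - L) < eps.

Definition diverges_pinf (F : R -> R) : Prop :=
  forall M, exists T, forall x, x > T -> F x > M.

Definition g1 (alpha beta tau z : R) : R :=
  sqrt (Rabs (z + alpha)) / sqrt (Rabs (z - beta))
  / sqrt (tau ^ 2 - z ^ 2) / sqrt (z ^ 2 + 4).

Definition g2 (alpha beta tau z : R) : R :=
  sqrt (Rabs (z - beta)) / sqrt (Rabs (z + alpha))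
  / sqrt (tau ^ 2 - z ^ 2) / sqrt (z ^ 2 + 4).

(* Main.v *)
Require Import Defs.
From Stdlib Require Import Reals Lra Classical.
From Coquelicot Require Import Coquelicot.
Open Scope R_scope.
Implicit Types f g h : R -> R.

Definition IMP (f : R -> R) (a b L : R) : Prop :=
  (forall c d, a < c -> c <= d -> d < b -> ex_RInt f c d) /\
  forall eps, eps > 0 -> exists delta, delta > 0 /\
    forall c d, a < c -> c < a + delta -> b - delta < d -> d < b -> c <= d ->
      Rabs (RInt f c d - L) < eps.

Definition PINF (f : R -> R) (a L : R) : Prop :=
  (forall c d, a < c -> c <= d -> ex_RInt f c d) /\
  forall eps, eps > 0 -> exists M delta, delta > 0 /\
    forall c d, a < c -> c < a + delta -> M < d -> c <= d ->
      Rabs (RInt f c d - L) < eps.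

Lemma imp_of f a b L : improper_int f a b L -> IMP f a b L.
Proof.
  intros [H1 H2]; split.
  - intros c d h1 h2 h3; destruct (H1 c d h1 h2 h3) as [pr]; now apply ex_RInt_Reals_1.
  - intros eps He; destruct (H2 eps He) as [dl [Hd H]]; exists dl; split; auto.
    intros c d h1 h2 h3 h4 h5. destruct (H1 c d h1 h5 h4) as [pr].
    rewrite (RInt_Reals f c d pr). now apply H.
Qed.

Lemma of_imp f a b L : IMP f a b L -> improper_int f a b L.
Proof.
  intros [H1 H2]; split.
  - intros c d h1 h2 h3; constructor; apply ex_RInt_Reals_0; auto.
  - intros eps He; destruct (H2 eps He) as [dl [Hd H]]; exists dl; split; auto.
    intros c d pr h1 h2 h3 h4 h5.
    rewrite <- (RInt_Reals f c d pr). now apply H.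
Qed.

Lemma of_pinf f a L : PINF f a L -> improper_int_pinf f a L.
Proof.
  intros [H1 H2]; split.
  - intros c d h1 h2; constructor; apply ex_RInt_Reals_0; auto.
  - intros eps He; destruct (H2 eps He) as [M [dl [Hd H]]]; exists M, dl; split; auto.
    intros c d pr h1 h2 h3 h4.
    rewrite <- (RInt_Reals f c d pr). now apply H.
Qed.

Lemma RInt_refl f c d : ex_RInt f (-d) (-c) ->
  ex_RInt (fun y => f (- y)) c d /\ RInt (fun y => f (- y)) c d = RInt f (-d) (-c).
Proof.
  intros H. assert (H' : ex_RInt f (-c) (-d)) by now apply ex_RInt_swap.
  destruct H' as [l Hl].
  assert (K : is_RInt (fun y => f (- y)) c d (opp l)).
  { apply is_RInt_comp_opp in Hl. apply is_RInt_opp in Hl.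
    refine (is_RInt_ext _ _ _ _ _ _ Hl). intros x _. apply opp_opp. }
  split. exists (opp l); exact K.
  etransitivity. apply is_RInt_unique; exact K.
  symmetry. apply is_RInt_unique. apply is_RInt_swap. exact Hl.
Qed.

Lemma ninf_of_pinf f g a L : PINF f a L -> (forall z, z < -a -> g z = f (- z)) ->
  improper_int_ninf g (-a) L.
Proof.
  intros [H1 H2] Hg.
  assert (E : forall c d, c <= d -> d < -a -> ex_RInt g c d /\ RInt g c d = RInt f (-d) (-c)).
  { intros c d h1 h2. destruct (RInt_refl f c d) as [e1 e2].
    apply H1; lra. split.
    - eapply ex_RInt_ext; [| exact e1]. intros x Hx. rewrite Hg; auto.
      rewrite Rmin_left in Hx by lra. rewrite Rmax_right in Hx by lra. lra.
    - rewrite <- e2. apply RInt_ext. intros x Hx. apply Hg.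
      rewrite Rmin_left in Hx by lra. rewrite Rmax_right in Hx by lra. lra. }
  split.
  - intros c d h1 h2; constructor; apply ex_RInt_Reals_0; apply E; auto.
  - intros eps He; destruct (H2 eps He) as [M [dl [Hd H]]]; exists (-M), dl; split; auto.
    intros c d pr h1 h2 h3 h4.
    rewrite <- (RInt_Reals g c d pr). destruct (E c d h4 h3) as [_ ->].
    apply H; lra.
Qed.

Lemma exc1 f a b c : a <= b <= c -> ex_RInt f a c -> ex_RInt f a b.
Proof. intros; now apply (ex_RInt_Chasles_1 (V:=R_CompleteNormedModule) f a b c). Qed.
Lemma exc2 f a b c : a <= b <= c -> ex_RInt f a c -> ex_RInt f b c.
Proof. intros; now apply (ex_RInt_Chasles_2 (V:=R_CompleteNormedModule) f a b c). Qed.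

Lemma abs_lt x L e : Rabs (x - L) < e -> L - e < x < L + e.
Proof. intros H; apply Rabs_def2 in H; lra. Qed.

Lemma lt_abs x L e : L - e < x < L + e -> Rabs (x - L) < e.
Proof. intros H; apply Rabs_def1; lra. Qed.

Lemma chasles f a b c : ex_RInt f a b -> ex_RInt f b c -> RInt f a c = RInt f a b + RInt f b c.
Proof. intros h1 h2. rewrite <- (RInt_Chasles f a b c h1 h2). reflexivity. Qed.

Lemma sub_le f c d c' d' : c' <= c -> c <= d -> d <= d' -> ex_RInt f c' d' ->
  (forall x, c' < x < d' -> 0 <= f x) -> RInt f c d <= RInt f c' d'.
Proof.
  intros h1 h2 h3 He Hp.
  assert (e1 : ex_RInt f c' d) by (apply exc1 with d'; auto; lra).
  assert (e2 : ex_RInt f c d) by (apply exc2 with c'; auto; lra).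
  assert (e3 : ex_RInt f d d') by (apply exc2 with c'; auto; lra).
  assert (e4 : ex_RInt f c' c) by (apply exc1 with d; auto; lra).
  rewrite (chasles f c' d d') by auto. rewrite (chasles f c' c d) by auto.
  assert (0 <= RInt f c' c). { apply RInt_ge_0; auto. intros; apply Hp; lra. }
  assert (0 <= RInt f d d'). { apply RInt_ge_0; auto. intros; apply Hp; lra. }
  lra.
Qed.

Lemma imp_le_L f a b L c d : (forall x, a < x < b -> 0 <= f x) -> IMP f a b L ->
  a < c -> c <= d -> d < b -> RInt f c d <= L.
Proof.
  intros Hp [H1 H2] h1 h2 h3.
  destruct (Rle_or_lt (RInt f c d) L) as [|Hlt]; auto.
  destruct (H2 (RInt f c d - L)) as [dl [Hd H]]; [lra|].
  set (c' := a + Rmin (c - a) dl / 2). set (d' := b - Rmin (b - d) dl / 2).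
  assert (Rmin (c - a) dl <= c - a) by apply Rmin_l.
  assert (Rmin (c - a) dl <= dl) by apply Rmin_r.
  assert (Rmin (b - d) dl <= b - d) by apply Rmin_l.
  assert (Rmin (b - d) dl <= dl) by apply Rmin_r.
  assert (0 < Rmin (c - a) dl) by (apply Rmin_glb_lt; lra).
  assert (0 < Rmin (b - d) dl) by (apply Rmin_glb_lt; lra).
  assert (K := H c' d'). apply abs_lt in K; unfold c', d' in *; try lra.
  assert (RInt f c d <= RInt f c' d').
  { apply sub_le; unfold c', d'; try lra. apply H1; lra.
    intros; apply Hp; lra. }
  unfold c', d' in *; lra.
Qed.

Lemma imp_L_le f a b L B : a < b -> IMP f a b L ->
  (forall c d, a < c -> c <= d -> d < b -> RInt f c d <= B) -> L <= B.
Proof.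
  intros hab [H1 H2] HB.
  destruct (Rle_or_lt L B) as [|Hlt]; auto.
  destruct (H2 (L - B)) as [dl [Hd H]]; [lra|].
  assert (Rmin dl (b - a) <= dl) by apply Rmin_l.
  assert (Rmin dl (b - a) <= b - a) by apply Rmin_r.
  assert (0 < Rmin dl (b - a)) by (apply Rmin_glb_lt; lra).
  set (m := Rmin dl (b - a)) in *.
  assert (K := H (a + m / 3) (b - m / 3)). apply abs_lt in K; try lra.
  assert (RInt f (a + m / 3) (b - m / 3) <= B) by (apply HB; lra). lra.
Qed.

Lemma imp_exists f a b B : a < b ->
  (forall c d, a < c -> c <= d -> d < b -> ex_RInt f c d) ->
  (forall x, a < x < b -> 0 <= f x) ->
  (forall c d, a < c -> c <= d -> d < b -> RInt f c d <= B) -> exists L, IMP f a b L.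
Proof.
  intros hab H1 Hp HB.
  set (E := fun y => exists c d, a < c /\ c <= d /\ d < b /\ y = RInt f c d).
  assert (Hb : bound E). { exists B. intros y [c [d [? [? [? ->]]]]]. apply HB; auto. }
  assert (Hn : exists x, E x). { exists (RInt f ((a+b)/2) ((a+b)/2)).
    exists ((a+b)/2), ((a+b)/2); repeat split; lra. }
  destruct (completeness E Hb Hn) as [L [Hu Hl]].
  exists L; split; auto.
  intros eps He.
  assert (Hx : exists y, E y /\ L - eps < y).
  { apply NNPP; intro Hn'. assert (L <= L - eps); [|lra].
    apply Hl. intros y Hy. destruct (Rle_or_lt y (L - eps)); auto.
    exfalso; apply Hn'; exists y; auto. }
  destruct Hx as [y [[c0 [d0 [h1 [h2 [h3 ->]]]]] Hy]].
  exists (Rmin (c0 - a) (b - d0)). split. apply Rmin_glb_lt; lra.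
  intros c d k1 k2 k3 k4 k5.
  assert (Rmin (c0 - a) (b - d0) <= c0 - a) by apply Rmin_l.
  assert (Rmin (c0 - a) (b - d0) <= b - d0) by apply Rmin_r.
  assert (RInt f c0 d0 <= RInt f c d).
  { apply sub_le; try lra. apply H1; lra. intros; apply Hp; lra. }
  assert (RInt f c d <= L). { apply Hu. exists c, d; repeat split; auto. }
  apply lt_abs; lra.
Qed.

Lemma pinf_le_L f a L c d : (forall x, a < x -> 0 <= f x) -> PINF f a L ->
  a < c -> c <= d -> RInt f c d <= L.
Proof.
  intros Hp [H1 H2] h1 h2.
  destruct (Rle_or_lt (RInt f c d) L) as [|Hlt]; auto.
  destruct (H2 (RInt f c d - L)) as [M [dl [Hd H]]]; [lra|].
  set (c' := a + Rmin (c - a) dl / 2). set (d' := Rmax d M + 1).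
  assert (Rmin (c - a) dl <= c - a) by apply Rmin_l.
  assert (Rmin (c - a) dl <= dl) by apply Rmin_r.
  assert (d <= Rmax d M) by apply Rmax_l.
  assert (M <= Rmax d M) by apply Rmax_r.
  assert (0 < Rmin (c - a) dl) by (apply Rmin_glb_lt; lra).
  assert (K := H c' d'). apply abs_lt in K; unfold c', d' in *; try lra.
  assert (RInt f c d <= RInt f c' d').
  { apply sub_le; unfold c', d'; try lra. apply H1; lra.
    intros; apply Hp; lra. }
  unfold c', d' in *; lra.
Qed.

Lemma pinf_exists f a B :
  (forall c d, a < c -> c <= d -> ex_RInt f c d) ->
  (forall x, a < x -> 0 <= f x) ->
  (forall c d, a < c -> c <= d -> RInt f c d <= B) -> exists L, PINF f a L.
Proof.
  intros H1 Hp HB.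
  set (E := fun y => exists c d, a < c /\ c <= d /\ y = RInt f c d).
  assert (Hb : bound E). { exists B. intros y [c [d [? [? ->]]]]. apply HB; auto. }
  assert (Hn : exists x, E x). { exists (RInt f (a+1) (a+1)).
    exists (a+1), (a+1); repeat split; lra. }
  destruct (completeness E Hb Hn) as [L [Hu Hl]].
  exists L; split; auto.
  intros eps He.
  assert (Hx : exists y, E y /\ L - eps < y).
  { apply NNPP; intro Hn'. assert (L <= L - eps); [|lra].
    apply Hl. intros y Hy. destruct (Rle_or_lt y (L - eps)); auto.
    exfalso; apply Hn'; exists y; auto. }
  destruct Hx as [y [[c0 [d0 [h1 [h2 ->]]]] Hy]].
  exists d0, (c0 - a). split. lra.
  intros c d k1 k2 k3 k4.
  assert (RInt f c0 d0 <= RInt f c d).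
  { apply sub_le; try lra. apply H1; lra. intros; apply Hp; lra. }
  assert (RInt f c d <= L). { apply Hu. exists c, d; repeat split; auto. }
  apply lt_abs; lra.
Qed.

Lemma ex_scalR f a b k : ex_RInt f a b -> ex_RInt (fun x => k * f x) a b.
Proof. intros H. apply (ex_RInt_scal (V:=R_CompleteNormedModule) f a b k) in H. exact H. Qed.
Lemma RInt_scalR f a b k : ex_RInt f a b -> RInt (fun x => k * f x) a b = k * RInt f a b.
Proof. intros H. apply (RInt_scal (V:=R_CompleteNormedModule) f a b k) in H. exact H. Qed.
Lemma ex_minusR f g a b : ex_RInt f a b -> ex_RInt g a b -> ex_RInt (fun x => f x - g x) a b.
Proof. intros H1 H2. exact (ex_RInt_minus (V:=R_CompleteNormedModule) f g a b H1 H2). Qed.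
Lemma RInt_minusR f g a b : ex_RInt f a b -> ex_RInt g a b ->
  RInt (fun x => f x - g x) a b = RInt f a b - RInt g a b.
Proof. intros H1 H2. exact (RInt_minus (V:=R_CompleteNormedModule) f g a b H1 H2). Qed.
Lemma ex_plusR f g a b : ex_RInt f a b -> ex_RInt g a b -> ex_RInt (fun x => f x + g x) a b.
Proof. intros H1 H2. exact (ex_RInt_plus (V:=R_CompleteNormedModule) f g a b H1 H2). Qed.
Lemma RInt_plusR f g a b : ex_RInt f a b -> ex_RInt g a b ->
  RInt (fun x => f x + g x) a b = RInt f a b + RInt g a b.
Proof. intros H1 H2. exact (RInt_plus (V:=R_CompleteNormedModule) f g a b H1 H2). Qed.

Lemma in_open c d x : c <= d -> Rmin c d < x < Rmax c d -> c < x < d.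
Proof. intros h H. rewrite Rmin_left in H by lra. rewrite Rmax_right in H by lra. lra. Qed.

Lemma imp_ext f g a b L : (forall x, a < x < b -> f x = g x) -> IMP f a b L -> IMP g a b L.
Proof.
  intros E [H1 H2]. split.
  - intros c d h1 h2 h3. eapply ex_RInt_ext; [| apply H1; eauto].
    intros x Hx; apply in_open in Hx; auto. apply E; lra.
  - intros eps He; destruct (H2 eps He) as [dl [Hd H]]; exists dl; split; auto.
    intros c d k1 k2 k3 k4 k5. rewrite <- (RInt_ext f g). apply H; auto.
    intros x Hx; apply in_open in Hx; auto. apply E; lra.
Qed.

Lemma imp_scal f a b L k : IMP f a b L -> IMP (fun x => k * f x) a b (k * L).
Proof.
  intros [H1 H2]. split.
  - intros c d h1 h2 h3. apply ex_scalR; auto.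
  - intros eps He. destruct (H2 (eps / (Rabs k + 1))) as [dl [Hd H]].
    { apply Rdiv_lt_0_compat; auto. pose proof (Rabs_pos k); lra. }
    exists dl; split; auto. intros c d k1 k2 k3 k4 k5.
    rewrite RInt_scalR by auto. rewrite <- Rmult_minus_distr_l, Rabs_mult.
    specialize (H c d k1 k2 k3 k4 k5).
    pose proof (Rabs_pos k). pose proof (Rabs_pos (RInt f c d - L)).
    apply Rle_lt_trans with ((Rabs k + 1) * Rabs (RInt f c d - L)).
    nra. apply Rmult_lt_compat_l with (r := Rabs k + 1) in H; [|lra].
    replace ((Rabs k + 1) * (eps / (Rabs k + 1))) with eps in H by (field; lra). lra.
Qed.

Lemma imp_minus f g a b L1 L2 : IMP f a b L1 -> IMP g a b L2 ->
  IMP (fun x => f x - g x) a b (L1 - L2).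
Proof.
  intros [H1 H2] [G1 G2]. split.
  - intros c d h1 h2 h3. apply ex_minusR; auto.
  - intros eps He. destruct (H2 (eps/2)) as [d1 [Hd1 H]]; [lra|].
    destruct (G2 (eps/2)) as [d2 [Hd2 G]]; [lra|].
    exists (Rmin d1 d2). split. apply Rmin_glb_lt; lra.
    assert (Rmin d1 d2 <= d1) by apply Rmin_l. assert (Rmin d1 d2 <= d2) by apply Rmin_r.
    intros c d k1 k2 k3 k4 k5. rewrite RInt_minusR by auto.
    assert (A1 := H c d k1 ltac:(lra) ltac:(lra) k4 k5).
    assert (A2 := G c d k1 ltac:(lra) ltac:(lra) k4 k5).
    apply abs_lt in A1. apply abs_lt in A2. apply lt_abs; lra.
Qed.

Lemma imp_refl f a b L : IMP f a b L -> IMP (fun x => f (- x)) (-b) (-a) L.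
Proof.
  intros [H1 H2]. split.
  - intros c d h1 h2 h3. apply RInt_refl. apply H1; lra.
  - intros eps He; destruct (H2 eps He) as [dl [Hd H]]; exists dl; split; auto.
    intros c d k1 k2 k3 k4 k5. destruct (RInt_refl f c d) as [_ ->].
    apply H1; lra. apply H; lra.
Qed.

Lemma part_i f a b K2 T0 F :
  a < b -> 0 < T0 -> K2 < T0 * T0 -> 0 <= K2 ->
  (forall z, a < z < b -> z ^ 2 < K2) ->
  (forall c d, a < c -> c <= d -> d < b -> ex_RInt f c d) ->
  (forall z, a < z < b -> 0 <= f z) ->
  (forall tau, T0 < tau -> IMP (fun z => f z / sqrt (tau ^ 2 - z ^ 2)) a b (F tau)) ->
  exists L, IMP f a b L /\ tends_at_pinf (fun tau => tau * F tau) L.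
Proof.
  intros hab hT0 hK hK0 Hz Hex Hp HF.
  assert (G : forall tau, T0 < tau ->
     IMP (fun z => tau * (f z / sqrt (tau ^ 2 - z ^ 2))) a b (tau * F tau)).
  { intros tau ht. apply imp_scal; auto. }
  assert (PW : forall tau z, T0 < tau -> a < z < b ->
     0 < sqrt (tau ^ 2 - K2) /\ sqrt (tau ^ 2 - K2) <= sqrt (tau ^ 2 - z ^ 2) /\
     sqrt (tau ^ 2 - z ^ 2) <= tau).
  { intros tau z ht hz. specialize (Hz z hz).
    assert (T0 * T0 < tau * tau) by nra.
    split; [apply sqrt_lt_R0; nra|]. split. apply sqrt_le_1; nra.
    pose proof (pow2_ge_0 z).
    apply Rle_trans with (sqrt (tau ^ 2)). apply sqrt_le_1; nra. rewrite sqrt_pow2; lra. }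
  assert (Low : forall tau z, T0 < tau -> a < z < b ->
     f z <= tau * (f z / sqrt (tau ^ 2 - z ^ 2))).
  { intros tau z ht hz. destruct (PW tau z ht hz) as [p1 [p2 p3]]. specialize (Hp z hz).
    unfold Rdiv. set (S := sqrt (tau ^ 2 - z ^ 2)) in *.
    assert (tau * / S >= 1). { apply Rle_ge. rewrite <- (Rinv_r S) by lra.
      apply Rmult_le_compat_r; auto. left; apply Rinv_0_lt_compat; lra. }
    nra. }
  assert (Up : forall tau z, T0 < tau -> a < z < b ->
     tau * (f z / sqrt (tau ^ 2 - z ^ 2)) <= tau / sqrt (tau ^ 2 - K2) * f z).
  { intros tau z ht hz. destruct (PW tau z ht hz) as [p1 [p2 p3]]. specialize (Hp z hz).
    unfold Rdiv. assert (/ sqrt (tau ^ 2 - z ^ 2) <= / sqrt (tau ^ 2 - K2)).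
    { apply Rinv_le_contravar; lra. }
    assert (0 <= tau * f z) by nra. nra. }
  assert (Gnn : forall tau z, T0 < tau -> a < z < b ->
     0 <= tau * (f z / sqrt (tau ^ 2 - z ^ 2))).
  { intros. pose proof (Low tau z H H0). pose proof (Hp z H0). lra. }
  set (t0 := T0 + 1).
  destruct (imp_exists f a b (t0 * F t0)) as [L HL]; auto.
  { intros c d h1 h2 h3. apply Rle_trans with (RInt (fun z => t0 * (f z / sqrt (t0 ^ 2 - z ^ 2))) c d).
    apply RInt_le; auto. apply (proj1 (G t0 ltac:(unfold t0; lra))); auto.
    intros; apply Low; unfold t0; try lra.
    apply (imp_le_L _ a b); auto. intros; apply Gnn; unfold t0; lra. apply G; unfold t0; lra. }
  exists L; split; auto.
  assert (L0 : 0 <= L).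
  { replace 0 with (RInt f ((a+b)/2) ((a+b)/2)). apply (imp_le_L f a b); auto; lra.
    apply (RInt_point (V:=R_CompleteNormedModule)). }
  assert (B1 : forall tau, T0 < tau -> L <= tau * F tau).
  { intros tau ht. apply (imp_L_le f a b); auto. intros c d h1 h2 h3.
    apply Rle_trans with (RInt (fun z => tau * (f z / sqrt (tau ^ 2 - z ^ 2))) c d).
    apply RInt_le; auto. apply (proj1 (G tau ht)); auto.
    intros; apply Low; auto; lra.
    apply (imp_le_L _ a b); auto. }
  assert (B2 : forall tau, T0 < tau -> tau * F tau <= tau / sqrt (tau ^ 2 - K2) * L).
  { intros tau ht. apply (imp_L_le _ a b _ _ hab (G tau ht)). intros c d h1 h2 h3.
    apply Rle_trans with (RInt (fun z => tau / sqrt (tau ^ 2 - K2) * f z) c d).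
    apply RInt_le; auto. apply (proj1 (G tau ht)); auto. apply ex_scalR; auto.
    intros; apply Up; auto; lra.
    rewrite RInt_scalR by auto. apply Rmult_le_compat_l.
    destruct (PW tau ((a+b)/2) ht) as [p1 _]; [lra|]. unfold Rdiv.
    apply Rmult_le_pos; [lra|]. left; apply Rinv_0_lt_compat; auto.
    apply (imp_le_L f a b); auto. }
  intros eps He.
  exists (T0 + K2 + 1 + 2 * K2 * (L + 1) / eps).
  intros tau ht.
  assert (0 <= 2 * K2 * (L + 1) / eps).
  { unfold Rdiv. apply Rmult_le_pos. nra. left; apply Rinv_0_lt_compat; lra. }
  assert (ht0 : T0 < tau) by lra.
  specialize (B1 tau ht0). specialize (B2 tau ht0).
  set (S0 := sqrt (tau ^ 2 - K2)) in *.
  assert (hS0 : S0 * S0 = tau ^ 2 - K2). { unfold S0. apply sqrt_sqrt. nra. }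
  assert (pS0 : 0 < S0). { unfold S0. apply sqrt_lt_R0. nra. }
  assert (hS1 : tau / 2 <= S0). { assert (tau * tau <= 4 * (S0 * S0)) by nra. nra. }
  assert (Q : tau / S0 - 1 <= 2 * K2 / tau ^ 2).
  { apply Rmult_le_reg_r with (S0 * tau ^ 2). nra.
    unfold Rdiv. rewrite Rmult_minus_distr_r.
    replace (tau * / S0 * (S0 * tau ^ 2)) with (tau ^ 3) by (field; lra).
    replace (2 * K2 * / tau ^ 2 * (S0 * tau ^ 2)) with (2 * K2 * S0) by (field; lra).
    replace K2 with (tau ^ 2 - S0 * S0) by lra.
    assert (S0 <= tau) by nra.
    assert (0 <= 2 * S0 * (tau + S0) - tau * tau) by nra.
    assert (0 <= (tau - S0) * (2 * S0 * (tau + S0) - tau * tau)) by (apply Rmult_le_pos; lra).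
    nra. }
  assert (Q2 : 2 * K2 / tau ^ 2 * L < eps).
  { assert (2 * K2 * (L + 1) / eps < tau) by lra.
    apply Rmult_lt_compat_r with (r := eps) in H0; auto.
    replace (2 * K2 * (L + 1) / eps * eps) with (2 * K2 * (L + 1)) in H0 by (field; lra).
    assert (it : 0 < / tau <= 1). { split. apply Rinv_0_lt_compat; lra.
      rewrite <- Rinv_1. apply Rinv_le_contravar; lra. }
    assert (e2 : / tau ^ 2 = / tau * / tau) by (field; lra).
    assert (2 * K2 * (L + 1) / tau < eps).
    { apply Rmult_lt_reg_r with tau. lra. unfold Rdiv. rewrite Rmult_assoc, Rinv_l by lra. nra. }
    unfold Rdiv in *. rewrite e2.
    assert (0 <= 2 * K2 * L) by nra.
    assert (2 * K2 * L * (/ tau * / tau) <= 2 * K2 * L * / tau).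
    { apply Rmult_le_compat_l; auto. nra. }
    nra. }
  apply lt_abs. split. nra.
  assert (tau / S0 * L <= (1 + 2 * K2 / tau ^ 2) * L) by (apply Rmult_le_compat_r; lra).
  nra.
Qed.

Lemma cod (f : R -> R) x : ex_derive f x -> continuous f x.
Proof. intros H. exact (ex_derive_continuous (K:=R_AbsRing) (V:=R_NormedModule) f x H). Qed.

Definition hq (q p z : R) : R := (q + p) / (sqrt (z ^ 2 + 4) * sqrt (z - q) * sqrt (z + p)).

Lemma hq_cont q p z : q + p > 0 -> q < z -> continuous (hq q p) z.
Proof.
  intros hs hz. apply cod. unfold hq. auto_derive.
  repeat split; try lra. nra.
  assert (0 < sqrt (z * (z * 1) + 4)) by (apply sqrt_lt_R0; nra).
  assert (0 < sqrt (z - q)) by (apply sqrt_lt_R0; lra).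
  assert (0 < sqrt (z + p)) by (apply sqrt_lt_R0; lra).
  apply Rgt_not_eq. apply Rmult_lt_0_compat; auto. apply Rmult_lt_0_compat; auto.
Qed.

Lemma hq_pos q p z : q + p > 0 -> q < z -> 0 < hq q p z.
Proof.
  intros hs hz. unfold hq.
  assert (0 < sqrt (z ^ 2 + 4)) by (apply sqrt_lt_R0; pose proof (pow2_ge_0 z); lra).
  assert (0 < sqrt (z - q)) by (apply sqrt_lt_R0; lra).
  assert (0 < sqrt (z + p)) by (apply sqrt_lt_R0; lra).
  apply Rdiv_lt_0_compat; [lra|]. apply Rmult_lt_0_compat; auto. apply Rmult_lt_0_compat; auto.
Qed.

Lemma hq_ex q p c d : q + p > 0 -> q < c -> c <= d -> ex_RInt (hq q p) c d.
Proof.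
  intros hs hc hcd. apply (ex_RInt_continuous (V:=R_CompleteNormedModule)).
  intros z Hz. rewrite Rmin_left in Hz by lra. apply hq_cont; auto; lra.
Qed.

Lemma atan_prim q c d : q < c -> c <= d ->
  RInt (fun z => / (2 * sqrt (z - q) * (1 + (z - q)))) c d =
  atan (sqrt (d - q)) - atan (sqrt (c - q)) /\
  ex_RInt (fun z => / (2 * sqrt (z - q) * (1 + (z - q)))) c d.
Proof.
  intros h1 h2.
  assert (H : is_RInt (fun z => / (2 * sqrt (z - q) * (1 + (z - q)))) c d
            (minus (atan (sqrt (d - q))) (atan (sqrt (c - q))))).
  { apply (is_RInt_derive (fun z => atan (sqrt (z - q)))).
    - intros x Hx. rewrite Rmin_left in Hx by lra. rewrite Rmax_right in Hx by lra.
      auto_derive. lra. 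
      assert (0 < sqrt (x - q)) by (apply sqrt_lt_R0; lra).
      replace (x + - q) with (x - q) by ring.
      replace (sqrt (x - q) * (sqrt (x - q) * 1)) with (x - q).
      lazymatch goal with |- ?a = ?b => change (a = b :> R) end. field; lra. rewrite Rmult_1_r, sqrt_sqrt; lra.
    - intros x Hx. rewrite Rmin_left in Hx by lra. rewrite Rmax_right in Hx by lra.
      apply cod. auto_derive. repeat split; try lra.
      assert (0 < sqrt (x + - q)) by (apply sqrt_lt_R0; lra). nra. }
  split. apply (is_RInt_unique (V:=R_CompleteNormedModule)) in H. rewrite H. reflexivity.
  eexists; eauto.
Qed.

Lemma sqrt_prim q t c d : q < c -> c <= d -> d < t ->
  ex_RInt (fun z => / sqrt (z - q) + / sqrt (t - z)) c d /\
  RInt (fun z => / sqrt (z - q) + / sqrt (t - z)) c d =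
  (2 * sqrt (d - q) - 2 * sqrt (t - d)) - (2 * sqrt (c - q) - 2 * sqrt (t - c)).
Proof.
  intros h1 h2 h3.
  assert (H : is_RInt (fun z => / sqrt (z - q) + / sqrt (t - z)) c d
            (minus (2 * sqrt (d - q) - 2 * sqrt (t - d)) (2 * sqrt (c - q) - 2 * sqrt (t - c)))).
  { apply (is_RInt_derive (fun z => 2 * sqrt (z - q) - 2 * sqrt (t - z))).
    - intros x Hx. rewrite Rmin_left in Hx by lra. rewrite Rmax_right in Hx by lra.
      auto_derive. lra.
      replace (x + - q) with (x - q) by ring. replace (t + - x) with (t - x) by ring.
      assert (0 < sqrt (x - q)) by (apply sqrt_lt_R0; lra).
      assert (0 < sqrt (t - x)) by (apply sqrt_lt_R0; lra).
      lazymatch goal with |- ?a = ?b => change (a = b :> R) end. field; lra.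
    - intros x Hx. rewrite Rmin_left in Hx by lra. rewrite Rmax_right in Hx by lra.
      apply cod. auto_derive. repeat split; try lra.
      assert (0 < sqrt (x + - q)) by (apply sqrt_lt_R0; lra). lra.
      assert (0 < sqrt (t + - x)) by (apply sqrt_lt_R0; lra). lra. }
  split. eexists; eauto.
  apply (is_RInt_unique (V:=R_CompleteNormedModule)) in H. rewrite H. reflexivity.
Qed.

Lemma div_mono a x y : 0 <= a -> 0 < x -> x <= y -> a / y <= a / x.
Proof.
  intros ha hx hxy. unfold Rdiv. apply Rmult_le_compat_l; auto.
  apply Rinv_le_contravar; auto.
Qed.

Lemma hq_major q p z : q + p > 0 -> q < z ->
  hq q p z <= 2 * (q + p) * sqrt (2 + (1 - q) ^ 2) / sqrt (q + p) *
               / (2 * sqrt (z - q) * (1 + (z - q))).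
Proof.
  intros hs hz. unfold hq.
  set (A := sqrt (z ^ 2 + 4)). set (U := sqrt (z - q)). set (W := sqrt (z + p)).
  set (k := sqrt (2 + (1 - q) ^ 2)). set (r := sqrt (q + p)).
  pose proof (pow2_ge_0 z). pose proof (pow2_ge_0 (1 - q)).
  assert (pA : 0 < A) by (apply sqrt_lt_R0; lra).
  assert (pU : 0 < U) by (apply sqrt_lt_R0; lra).
  assert (pW : 0 < W) by (apply sqrt_lt_R0; lra).
  assert (pk : 0 < k) by (apply sqrt_lt_R0; lra).
  assert (pr : 0 < r) by (apply sqrt_lt_R0; lra).
  assert (eA : A * A = z ^ 2 + 4) by (apply sqrt_sqrt; lra).
  assert (ek : k * k = 2 + (1 - q) ^ 2) by (apply sqrt_sqrt; lra).
  assert (rW : r <= W) by (apply sqrt_le_1; lra).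
  assert (k1 : 1 + (z - q) <= k * A).
  { assert ((1 + (z - q)) ^ 2 <= (k * A) ^ 2).
    { replace ((k * A) ^ 2) with ((k * k) * (A * A)) by ring. rewrite ek, eA.
      assert (0 <= (1 - q) ^ 2 * z ^ 2) by (apply Rmult_le_pos; auto).
      assert (0 <= (z - (1 - q)) ^ 2) by apply pow2_ge_0. nra. }
    assert (0 <= k * A) by nra. nra. }
  replace (2 * (q + p) * k / r * / (2 * U * (1 + (z - q))))
    with ((q + p) / (r * U * (1 + (z - q)) / k)) by (field; repeat split; lra).
  apply div_mono. lra.
  apply Rdiv_lt_0_compat; [|lra]. apply Rmult_lt_0_compat; [nra|lra].
  apply Rmult_le_reg_r with k. lra. unfold Rdiv. rewrite Rmult_assoc, Rinv_l, Rmult_1_r by lra.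
  assert (r * U <= W * U) by nra.
  assert (r * U * (1 + (z - q)) <= W * U * (k * A)).
  { apply Rmult_le_compat; try nra. }
  nra.
Qed.

Lemma err_pw q p t z : q + p > 0 -> q < z -> z < t -> 2 * Rabs q + 2 <= t ->
  t * (hq q p z / sqrt (t ^ 2 - z ^ 2)) <=
  hq q p z + sqrt 2 * ((q + p) + sqrt (q + p) * Rabs q) / (t * sqrt t) *
             (/ sqrt (z - q) + / sqrt (t - z)).
Proof.
  intros hs hz hzt ht.
  pose proof (Rabs_pos q) as aq0. pose proof (Rle_abs q) as aq1. pose proof (Rle_abs (-q)) as aq2.
  rewrite Rabs_Ropp in aq2.
  set (H := hq q p z). assert (pH : 0 < H) by (apply hq_pos; auto).
  set (s0 := q + p) in *. assert (es0 : s0 = q + p) by reflexivity.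
  set (S := sqrt (t ^ 2 - z ^ 2)). set (T := sqrt t). set (U := sqrt (z - q)).
  set (V := sqrt (t - z)). set (W := sqrt (z + p)). set (A := sqrt (z ^ 2 + 4)).
  set (r := sqrt s0). set (C := r * Rabs q).
  assert (zz : - t / 2 <= z) by lra.
  pose proof (pow2_ge_0 z) as z2.
  assert (pS : 0 < S) by (apply sqrt_lt_R0; nra).
  assert (eS : S * S = t ^ 2 - z ^ 2) by (apply sqrt_sqrt; nra).
  assert (pT : 0 < T) by (apply sqrt_lt_R0; lra).
  assert (eT : T * T = t) by (apply sqrt_sqrt; lra).
  assert (pU : 0 < U) by (apply sqrt_lt_R0; lra).
  assert (eU : U * U = z - q) by (apply sqrt_sqrt; lra).
  assert (pV : 0 < V) by (apply sqrt_lt_R0; lra).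
  assert (eV : V * V = t - z) by (apply sqrt_sqrt; lra).
  assert (pW : 0 < W) by (apply sqrt_lt_R0; lra).
  assert (eW : W * W = z + p) by (apply sqrt_sqrt; lra).
  assert (pA : 0 < A) by (apply sqrt_lt_R0; lra).
  assert (eA : A * A = z ^ 2 + 4) by (apply sqrt_sqrt; lra).
  assert (pr : 0 < r) by (apply sqrt_lt_R0; lra).
  assert (er : r * r = s0) by (apply sqrt_sqrt; lra).
  assert (p2 : 0 < sqrt 2) by (apply sqrt_lt_R0; lra).
  assert (e2 : sqrt 2 * sqrt 2 = 2) by (apply sqrt_sqrt; lra).
  assert (pC : 0 <= C) by (unfold C; apply Rmult_le_pos; lra).
  assert (eH : H = s0 / (A * U * W)) by reflexivity.
  assert (SA : S <= t) by nra.
  assert (Sa : t * (H / S) - H <= H * z ^ 2 / (t * S)).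
  { replace (t * (H / S) - H) with (H * (t - S) / S) by (field; lra).
    replace (H * z ^ 2 / (t * S)) with (H * (z ^ 2 / t) / S) by (field; lra).
    unfold Rdiv. apply Rmult_le_compat_r. left; apply Rinv_0_lt_compat; lra.
    apply Rmult_le_compat_l; [lra|].
    apply Rmult_le_reg_r with t. lra. rewrite Rmult_assoc, Rinv_l by lra. nra. }
  assert (Az : Rabs z <= A).
  { assert (Rabs z * Rabs z <= A * A). { rewrite <- Rabs_mult, Rabs_pos_eq by nra. nra. }
    pose proof (Rabs_pos z). nra. }
  assert (Sb : H * z ^ 2 <= s0 + C / U).
  { assert (z ^ 2 <= Rabs z * A).
    { replace (z ^ 2) with (Rabs z * Rabs z).
      apply Rmult_le_compat_l; auto. apply Rabs_pos.
      rewrite <- Rabs_mult, Rabs_pos_eq by nra. ring. }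
    assert (Rabs z <= U * U + Rabs q).
    { rewrite eU. apply Rabs_le. lra. }
    assert (UW : U <= W) by (apply sqrt_le_1; lra).
    assert (rW : r <= W) by (apply sqrt_le_1; lra).
    apply Rle_trans with (s0 * (U * U + Rabs q) / (U * W)).
    { rewrite eH. unfold Rdiv.
      replace (s0 * / (A * U * W) * z ^ 2) with (s0 * z ^ 2 * / A * / (U * W)) by (field; lra).
      apply Rmult_le_compat_r. left; apply Rinv_0_lt_compat; nra.
      apply Rmult_le_reg_r with A. lra. rewrite Rmult_assoc, Rinv_l by lra.
      assert (0 <= s0 * A * (U * U + Rabs q) - s0 * z ^ 2).
      { assert (z ^ 2 <= A * (U * U + Rabs q)).
        { apply Rle_trans with (Rabs z * A); auto. rewrite (Rmult_comm A).
          apply Rmult_le_compat_r; lra. }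
        nra. }
      nra. }
    replace (s0 * (U * U + Rabs q) / (U * W)) with (s0 * (U / W) + s0 * Rabs q / W / U)
      by (field; lra).
    unfold C. apply Rplus_le_compat.
    - assert (U / W <= 1). { apply Rmult_le_reg_r with W; auto. unfold Rdiv.
        rewrite Rmult_assoc, Rinv_l by lra. lra. }
      nra.
    - unfold Rdiv. apply Rmult_le_compat_r. left; apply Rinv_0_lt_compat; lra.
      replace (r * Rabs q) with (s0 * Rabs q * / r) by (rewrite <- er; field; lra).
      apply Rmult_le_compat_l. nra. apply Rinv_le_contravar; lra. }
  assert (Sc : / S <= sqrt 2 / (T * V)).
  { assert (T * V <= sqrt 2 * S).
    { assert ((T * V) * (T * V) <= (sqrt 2 * S) * (sqrt 2 * S)).
      { replace ((T * V) * (T * V)) with ((T * T) * (V * V)) by ring.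
        replace ((sqrt 2 * S) * (sqrt 2 * S)) with ((sqrt 2 * sqrt 2) * (S * S)) by ring.
        rewrite eT, eV, e2, eS.
        assert (0 <= (t - z) * (t + 2 * z)) by (apply Rmult_le_pos; lra). nra. }
      assert (0 < T * V) by nra. assert (0 < sqrt 2 * S) by nra.
      destruct (Rle_or_lt (T * V) (sqrt 2 * S)) as [|Hc]; auto.
      assert ((sqrt 2 * S) * (sqrt 2 * S) < (T * V) * (T * V)).
      { apply Rmult_le_0_lt_compat; lra. } lra. }
    unfold Rdiv. apply Rmult_le_reg_r with (S * (T * V)). apply Rmult_lt_0_compat; nra.
    replace (/ S * (S * (T * V))) with (T * V) by (field; lra).
    replace (sqrt 2 * / (T * V) * (S * (T * V))) with (sqrt 2 * S) by (field; lra). lra. }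
  assert (Sd : (s0 + C / U) / V <= (s0 + C) * (/ U + / V)).
  { assert (UV : 1 <= U + V).
    { assert (1 <= (U + V) * (U + V)) by nra. nra. }
    replace ((s0 + C / U) / V) with (s0 / V + C * (/ U * / V)) by (field; lra).
    assert (/ U * / V <= / U + / V).
    { apply Rmult_le_reg_r with (U * V). nra.
      replace (/ U * / V * (U * V)) with 1 by (field; lra).
      replace ((/ U + / V) * (U * V)) with (V + U) by (field; lra). lra. }
    assert (0 < / U) by (apply Rinv_0_lt_compat; lra).
    assert (0 < / V) by (apply Rinv_0_lt_compat; lra).
    unfold Rdiv. nra. }
  assert (0 <= s0 + C / U).
  { unfold Rdiv. assert (0 < / U) by (apply Rinv_0_lt_compat; lra). nra. }
  assert (K1 : H * z ^ 2 / (t * S) <= (s0 + C / U) * (sqrt 2 / (T * V)) / t).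
  { replace (H * z ^ 2 / (t * S)) with (H * z ^ 2 * / S / t) by (field; lra).
    unfold Rdiv at 1 3. apply Rmult_le_compat_r. left; apply Rinv_0_lt_compat; lra.
    apply Rmult_le_compat; auto. nra. left; apply Rinv_0_lt_compat; lra. }
  assert (K2 : (s0 + C / U) * (sqrt 2 / (T * V)) / t =
               sqrt 2 / (t * T) * ((s0 + C / U) / V)) by (field; lra).
  assert (K3 : sqrt 2 / (t * T) * ((s0 + C / U) / V) <=
               sqrt 2 / (t * T) * ((s0 + C) * (/ U + / V))).
  { apply Rmult_le_compat_l; auto. unfold Rdiv. apply Rmult_le_pos; [lra|].
    left; apply Rinv_0_lt_compat; nra. }
  assert (K4 : sqrt 2 / (t * T) * ((s0 + C) * (/ U + / V)) =
               sqrt 2 * (s0 + C) / (t * T) * (/ U + / V)) by (field; lra).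
  unfold C in *. lra.
Qed.

Lemma RInt_zero a b : RInt (fun _ : R => 0) a b = 0.
Proof.
  rewrite (RInt_const (V:=R_CompleteNormedModule)). apply (scal_zero_r (K:=R_Ring) (V:=R_ModuleSpace)).
Qed.

Lemma core q p D : q + p > 0 ->
  (forall t, p < t -> q < t -> IMP (fun z => hq q p z / sqrt (t ^ 2 - z ^ 2)) q t (D t)) ->
  exists L, PINF (hq q p) q L /\ 0 < L /\ tends_at_pinf (fun t => t * D t) L.
Proof.
  intros hs HD.
  set (M := 2 * (q + p) * sqrt (2 + (1 - q) ^ 2) / sqrt (q + p)).
  assert (pM : 0 <= M).
  { unfold M. unfold Rdiv. apply Rmult_le_pos. apply Rmult_le_pos. lra. apply sqrt_pos.
    left; apply Rinv_0_lt_compat; apply sqrt_lt_R0; lra. }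
  assert (hpos : forall z, q < z -> 0 <= hq q p z) by (intros; left; apply hq_pos; auto).
  destruct (pinf_exists (hq q p) q (M * PI)) as [L HL]; auto.
  { intros; apply hq_ex; auto. }
  { intros c d h1 h2. destruct (atan_prim q c d h1 h2) as [e1 e2].
    apply Rle_trans with (RInt (fun z => M * / (2 * sqrt (z - q) * (1 + (z - q)))) c d).
    apply RInt_le; auto. apply hq_ex; auto. apply ex_scalR; auto.
    intros x Hx. apply hq_major; lra.
    rewrite RInt_scalR, e1 by auto. apply Rmult_le_compat_l; auto.
    pose proof (atan_bound (sqrt (d - q))). pose proof (atan_bound (sqrt (c - q))). lra. }
  exists L. split; auto.
  split.
  { apply Rlt_le_trans with (RInt (hq q p) (q + 1) (q + 2)).
    rewrite <- (RInt_zero (q + 1) (q + 2)). apply RInt_lt. lra.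
    intros; apply hq_cont; auto; lra. intros; apply continuous_const.
    intros; apply hq_pos; auto; lra.
    apply (pinf_le_L _ q); auto; lra. }
  set (E0 := sqrt 2 * ((q + p) + sqrt (q + p) * Rabs q)).
  assert (pE0 : 0 <= E0).
  { unfold E0. apply Rmult_le_pos. apply sqrt_pos.
    pose proof (sqrt_pos (q + p)). pose proof (Rabs_pos q). nra. }
  intros eps He.
  destruct (proj2 HL (eps / 2)) as [M0 [dl [Hdl HLd]]]; [lra|].
  set (c0 := q + dl / 2). set (d0 := Rmax M0 c0 + 1).
  assert (M0 <= Rmax M0 c0) by apply Rmax_l. assert (c0 <= Rmax M0 c0) by apply Rmax_r.
  assert (hc0 : q < c0) by (unfold c0; lra). assert (hc1 : c0 < q + dl) by (unfold c0; lra).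
  assert (hd0 : M0 < d0) by (unfold d0; lra). assert (hcd : c0 <= d0) by (unfold d0; lra).
  clearbody c0 d0.
  assert (K0 := HLd c0 d0 hc0 hc1 hd0 hcd).
  apply abs_lt in K0.
  assert (p8 : 0 <= 8 * sqrt 2 * E0 / eps).
  { unfold Rdiv. apply Rmult_le_pos. pose proof (sqrt_pos 2). nra.
    left; apply Rinv_0_lt_compat; lra. }
  exists (2 * Rabs q + 2 + Rabs p + Rabs d0 + 8 * sqrt 2 * E0 / eps).
  intros t ht.
  pose proof (Rabs_pos q). pose proof (Rle_abs q). pose proof (Rle_abs p). pose proof (Rle_abs d0).
  pose proof (Rabs_pos p). pose proof (Rabs_pos d0).
  assert (Hpt : p < t) by lra. assert (Hqt : q < t) by lra.
  assert (G := imp_scal _ _ _ _ t (HD t Hpt Hqt)).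
  assert (Spw : forall z, q < z < t -> 0 < sqrt (t ^ 2 - z ^ 2) <= t).
  { intros z Hz. pose proof (Rle_abs (-q)) as nq. rewrite Rabs_Ropp in nq.
    assert (0 < (t - z) * (t + z)) by (apply Rmult_lt_0_compat; lra).
    split. apply sqrt_lt_R0. nra.
    pose proof (pow2_ge_0 z). pose proof (pow2_ge_0 t).
    apply Rle_trans with (sqrt (t ^ 2)). apply sqrt_le_1; nra.
    rewrite sqrt_pow2; lra. }
  assert (Gpos : forall z, q < z < t -> 0 <= t * (hq q p z / sqrt (t ^ 2 - z ^ 2))).
  { intros z Hz. destruct (Spw z Hz). pose proof (hq_pos q p z hs ltac:(lra)).
    apply Rmult_le_pos; [lra|]. unfold Rdiv; apply Rmult_le_pos; [lra|].
    left; apply Rinv_0_lt_compat; lra. }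
  apply lt_abs. split.
  -
    assert (RInt (hq q p) c0 d0 <= t * D t).
    { apply Rle_trans with (RInt (fun z => t * (hq q p z / sqrt (t ^ 2 - z ^ 2))) c0 d0).
      apply RInt_le. lra. apply hq_ex; auto; lra.
      apply (proj1 G); lra.
      intros z Hz. assert (Hz' : q < z < t) by (lra).
      destruct (Spw z Hz'). pose proof (hq_pos q p z hs ltac:(lra)).
      set (S := sqrt (t ^ 2 - z ^ 2)) in *.
      replace (t * (hq q p z / S)) with (hq q p z * (t / S)) by (field; lra).
      assert (1 <= t / S). { apply Rmult_le_reg_r with S; auto. unfold Rdiv.
        rewrite Rmult_assoc, Rinv_l by lra. lra. }
      nra.
      apply (imp_le_L _ q t); auto; lra. }
    lra.
  -
    set (T := sqrt t).
    assert (pT : 0 < T) by (apply sqrt_lt_R0; lra).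
    assert (UB : t * D t <= L + E0 / (t * T) * (4 * (sqrt 2 * T))).
    { apply (imp_L_le _ q t _ _ Hqt G). intros c d h1 h2 h3.
      destruct (sqrt_prim q t c d h1 h2 h3) as [ex1 e1].
      apply Rle_trans with (RInt (fun z => hq q p z + E0 / (t * T) *
                      (/ sqrt (z - q) + / sqrt (t - z))) c d).
      apply RInt_le; auto. apply (proj1 G); auto.
      apply ex_plusR. apply hq_ex; auto. apply ex_scalR; auto.
      intros z Hz. apply err_pw; auto; lra.
      rewrite RInt_plusR, RInt_scalR, e1; auto. 2: apply hq_ex; auto. 2: apply ex_scalR; auto.
      apply Rplus_le_compat. apply (pinf_le_L _ q); auto.
      apply Rmult_le_compat_l.
      { unfold Rdiv. apply Rmult_le_pos; auto. left; apply Rinv_0_lt_compat; nra. }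
      assert (sqrt (t - q) <= sqrt 2 * T).
      { unfold T. rewrite <- sqrt_mult by lra. apply sqrt_le_1; lra. }
      assert (sqrt (d - q) <= sqrt (t - q)) by (apply sqrt_le_1; lra).
      assert (sqrt (t - c) <= sqrt (t - q)) by (apply sqrt_le_1; lra).
      pose proof (sqrt_pos (t - d)). pose proof (sqrt_pos (c - q)). lra. }
    assert (E0 / (t * T) * (4 * (sqrt 2 * T)) = 4 * sqrt 2 * E0 / t) by (field; lra).
    assert (4 * sqrt 2 * E0 / t < eps / 2).
    { apply Rmult_lt_reg_r with t. lra. unfold Rdiv. rewrite Rmult_assoc, Rinv_l by lra.
      assert (8 * sqrt 2 * E0 / eps < t) by lra.
      apply Rmult_lt_compat_r with (r := eps) in H8; auto.
      replace (8 * sqrt 2 * E0 / eps * eps) with (8 * sqrt 2 * E0) in H8 by (field; lra).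
      lra. }
    lra.
Qed.

Lemma ln_prim c d : c <= d -> d < 2 ->
  ex_RInt (fun z => / (2 - z)) c d /\ RInt (fun z => / (2 - z)) c d = ln (2 - c) - ln (2 - d).
Proof.
  intros h1 h2.
  assert (H : is_RInt (fun z => / (2 - z)) c d (minus (- ln (2 - d)) (- ln (2 - c)))).
  { apply (is_RInt_derive (fun z => - ln (2 - z))).
    - intros x Hx. rewrite Rmin_left in Hx by lra. rewrite Rmax_right in Hx by lra.
      auto_derive. lra. replace (2 + - x) with (2 - x) by ring.
      lazymatch goal with |- ?a = ?b => change (a = b :> R) end. field; lra.
    - intros x Hx. rewrite Rmin_left in Hx by lra. rewrite Rmax_right in Hx by lra.
      apply cod. auto_derive. lra. }
  split. eexists; eauto.
  apply (is_RInt_unique (V:=R_CompleteNormedModule)) in H. rewrite H.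
  unfold minus, plus, opp; simpl. ring.
Qed.

Lemma refl_shift g w c d : ex_RInt g (w - d) (w - c) ->
  ex_RInt (fun y => g (w - y)) c d /\ RInt (fun y => g (w - y)) c d = RInt g (w - d) (w - c).
Proof.
  intros H. assert (H' : ex_RInt g (w - c) (w - d)) by now apply ex_RInt_swap.
  destruct H' as [l Hl].
  assert (Hl2 : is_RInt g ((-1) * c + w) ((-1) * d + w) l).
  { replace ((-1) * c + w) with (w - c) by ring. replace ((-1) * d + w) with (w - d) by ring. auto. }
  assert (K : is_RInt (fun y => g (w - y)) c d (opp l)).
  { apply (is_RInt_comp_lin g (-1) w c d) in Hl2. apply is_RInt_opp in Hl2.
    refine (is_RInt_ext _ _ _ _ _ _ Hl2). intros x _.
    replace ((-1) * x + w) with (w - x) by ring.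
    unfold scal; simpl; unfold mult; simpl; unfold opp; simpl. ring. }
  split. exists (opp l); exact K.
  etransitivity. apply is_RInt_unique; exact K.
  symmetry. apply is_RInt_unique. apply is_RInt_swap. exact Hl.
Qed.

Definition fI (a b z : R) : R := 1 / sqrt (z ^ 2 + 4) * sqrt ((a + z) / (b - z)).
Definition fJ (a b z : R) : R := 1 / sqrt (z ^ 2 + 4) * sqrt ((b - z) / (a + z)).

Lemma fI_cont a b z : -a < z < b -> continuous (fI a b) z.
Proof.
  intros hz. apply cod. unfold fI. auto_derive. repeat split; try lra.
  pose proof (pow2_ge_0 z). simpl in *; nra.
  assert (0 < sqrt (z * (z * 1) + 4)) by (apply sqrt_lt_R0; nra). lra.
  apply Rdiv_lt_0_compat; lra.
Qed.

Lemma fJ_cont a b z : -a < z < b -> continuous (fJ a b) z.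
Proof.
  intros hz. apply cod. unfold fJ. auto_derive. repeat split; try lra.
  pose proof (pow2_ge_0 z). simpl in *; nra.
  assert (0 < sqrt (z * (z * 1) + 4)) by (apply sqrt_lt_R0; nra). lra.
  apply Rdiv_lt_0_compat; lra.
Qed.

Lemma fI_ex a b c d : -a < c -> c <= d -> d < b -> ex_RInt (fI a b) c d.
Proof.
  intros. apply (ex_RInt_continuous (V:=R_CompleteNormedModule)).
  intros z Hz. rewrite Rmin_left in Hz by lra. rewrite Rmax_right in Hz by lra.
  apply fI_cont; lra.
Qed.

Lemma fJ_ex a b c d : -a < c -> c <= d -> d < b -> ex_RInt (fJ a b) c d.
Proof.
  intros. apply (ex_RInt_continuous (V:=R_CompleteNormedModule)).
  intros z Hz. rewrite Rmin_left in Hz by lra. rewrite Rmax_right in Hz by lra.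
  apply fJ_cont; lra.
Qed.

Lemma phi_pos a b y : a < b -> a + b > 0 -> -a < y < (b - a) / 2 ->
  0 < (fJ a b y - fI a b y) + (fJ a b (2 * ((b - a) / 2) - y) - fI a b (2 * ((b - a) / 2) - y)).
Proof.
  intros hab hs hy. unfold fI, fJ.
  replace (b - (2 * ((b - a) / 2) - y)) with (a + y) by field.
  replace (a + (2 * ((b - a) / 2) - y)) with (b - y) by field.
  set (m := (b - a) / 2) in *. assert (em : m = (b - a) / 2) by reflexivity.
  set (P := 1 / sqrt (y ^ 2 + 4)). set (Q := 1 / sqrt ((2 * m - y) ^ 2 + 4)).
  set (A := sqrt ((b - y) / (a + y))). set (B := sqrt ((a + y) / (b - y))).
  assert (PQ : Q < P).
  { unfold P, Q, Rdiv. rewrite !Rmult_1_l. apply Rinv_lt_contravar.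
    apply Rmult_lt_0_compat; apply sqrt_lt_R0; pose proof (pow2_ge_0 y);
      pose proof (pow2_ge_0 (2 * m - y)); lra.
    apply sqrt_lt_1. pose proof (pow2_ge_0 y); lra. pose proof (pow2_ge_0 (2 * m - y)); lra.
    assert (0 < m - y) by lra. assert (0 < m) by (unfold m; lra). simpl. nra. }
  assert (AB : B < A).
  { unfold A, B. apply sqrt_lt_1. left; apply Rdiv_lt_0_compat; lra.
    left; apply Rdiv_lt_0_compat; lra.
    apply Rmult_lt_reg_r with ((a + y) * (b - y)). apply Rmult_lt_0_compat; lra.
    replace ((a + y) / (b - y) * ((a + y) * (b - y))) with ((a + y) * (a + y)) by (field; lra).
    replace ((b - y) / (a + y) * ((a + y) * (b - y))) with ((b - y) * (b - y)) by (field; lra).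
    assert (a + y < b - y) by (unfold m in *; lra). nra. }
  replace (P * A - P * B + (Q * B - Q * A)) with ((P - Q) * (A - B)) by ring.
  apply Rmult_lt_0_compat; lra.
Qed.

Lemma cmp a b LI LJ : a < b -> a + b > 0 -> IMP (fI a b) (-a) b LI -> IMP (fJ a b) (-a) b LJ ->
  LI < LJ.
Proof.
  intros hab hs HI HJ.
  assert (G := imp_minus _ _ _ _ _ _ HJ HI).
  set (g := fun z => fJ a b z - fI a b z) in G.
  set (m := (b - a) / 2).
  set (phi := fun y => g y + g (2 * m - y)).
  assert (hm : -a < m) by (unfold m; lra).
  set (c1 := (-a + m) / 2).
  assert (hc1 : -a < c1 < m) by (unfold c1; lra).
  assert (gcont : forall z, -a < z < b -> continuous g z).
  { intros z hz. unfold g. apply (continuous_minus (V:=R_NormedModule)).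
    apply fJ_cont; auto. apply fI_cont; auto. }
  assert (phicont : forall y, -a < y <= m -> continuous phi y).
  { intros y hy. unfold phi. apply (continuous_plus (V:=R_NormedModule)).
    apply gcont; unfold m in *; lra.
    apply (continuous_comp (fun y => 2 * m - y) g).
    apply (continuous_minus (V:=R_NormedModule)). apply continuous_const. apply continuous_id.
    apply gcont; unfold m in *; lra. }
  assert (phipos : forall y, -a < y < m -> 0 < phi y).
  { intros y hy. unfold phi, g. apply phi_pos; auto. }
  assert (phiex : forall c, -a < c <= m -> ex_RInt phi c m).
  { intros c hc. apply (ex_RInt_continuous (V:=R_CompleteNormedModule)).
    intros z Hz. rewrite Rmin_left in Hz by lra. rewrite Rmax_right in Hz by lra.
    apply phicont; lra. }
  set (kappa := RInt phi c1 m).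
  assert (hk : 0 < kappa).
  { unfold kappa. rewrite <- (RInt_zero c1 m). apply RInt_lt. lra.
    intros; apply phicont; lra. intros; apply continuous_const.
    intros; apply phipos; lra. }
  assert (Key : forall c, -a < c <= c1 -> kappa <= RInt g c (2 * m - c)).
  { intros c hc.
    assert (exg : forall u v, -a < u -> u <= v -> v < b -> ex_RInt g u v).
    { intros u v h1 h2 h3. apply (ex_RInt_continuous (V:=R_CompleteNormedModule)).
      intros z Hz. rewrite Rmin_left in Hz by lra. rewrite Rmax_right in Hz by lra.
      apply gcont; lra. }
    assert (2 * m - c < b) by (unfold m in *; lra).
    rewrite (chasles g c m (2 * m - c)); [| apply exg; lra | apply exg; lra].
    destruct (refl_shift g (2 * m) c m) as [e1 e2].
    { replace (2 * m - m) with m by ring. apply exg; lra. }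
    replace (2 * m - m) with m in e2 by ring. rewrite <- e2.
    rewrite <- RInt_plusR; [| apply exg; lra | auto].
    apply sub_le; try lra. apply phiex; lra.
    intros; left; apply phipos; lra. }
  destruct (proj2 G (kappa / 2)) as [dl [Hdl Hd]]; [lra|].
  set (e := Rmin dl (c1 + a) / 2).
  assert (Rmin dl (c1 + a) <= dl) by apply Rmin_l.
  assert (Rmin dl (c1 + a) <= c1 + a) by apply Rmin_r.
  assert (0 < Rmin dl (c1 + a)) by (apply Rmin_glb_lt; lra).
  assert (K1 := Key (-a + e) ltac:(unfold e; lra)).
  assert (K2 := Hd (-a + e) (2 * m - (-a + e)) ltac:(unfold e; lra) ltac:(unfold e; lra)
     ltac:(unfold e, m in *; lra) ltac:(unfold e, m in *; lra) ltac:(unfold e, m in *; lra)).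
  apply abs_lt in K2. lra.
Qed.

Lemma g1_I2 al be t z : -al < z < be -> g1 al be t z = fI al be z / sqrt (t ^ 2 - z ^ 2).
Proof.
  intros hz. unfold g1, fI.
  rewrite (Rabs_pos_eq (z + al)) by lra. rewrite (Rabs_left1 (z - be)) by lra.
  replace (- (z - be)) with (be - z) by ring. replace (z + al) with (al + z) by ring.
  rewrite sqrt_div_alt by lra. unfold Rdiv. ring.
Qed.

Lemma g2_J2 al be t z : -al < z < be -> g2 al be t z = fJ al be z / sqrt (t ^ 2 - z ^ 2).
Proof.
  intros hz. unfold g2, fJ.
  rewrite (Rabs_pos_eq (z + al)) by lra. rewrite (Rabs_left1 (z - be)) by lra.
  replace (- (z - be)) with (be - z) by ring. replace (z + al) with (al + z) by ring.
  rewrite sqrt_div_alt by lra. unfold Rdiv. ring.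
Qed.

Lemma diff_key u v : 0 < u -> 0 < v ->
  sqrt u / sqrt v - sqrt v / sqrt u = (u - v) / (sqrt v * sqrt u).
Proof.
  intros hu hv. assert (0 < sqrt u) by (apply sqrt_lt_R0; lra).
  assert (0 < sqrt v) by (apply sqrt_lt_R0; lra).
  rewrite <- (sqrt_sqrt u) at 3 by lra. rewrite <- (sqrt_sqrt v) at 3 by lra.
  field; lra.
Qed.

Lemma g12_right al be t z : al + be > 0 -> be < z ->
  g1 al be t z - g2 al be t z = hq be al z / sqrt (t ^ 2 - z ^ 2).
Proof.
  intros hs hz. unfold g1, g2, hq.
  rewrite (Rabs_pos_eq (z + al)) by lra. rewrite (Rabs_pos_eq (z - be)) by lra.
  assert (0 < sqrt (z ^ 2 + 4)) by (apply sqrt_lt_R0; pose proof (pow2_ge_0 z); lra).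
  assert (0 < sqrt (z - be)) by (apply sqrt_lt_R0; lra).
  assert (0 < sqrt (z + al)) by (apply sqrt_lt_R0; lra).
  transitivity ((sqrt (z + al) / sqrt (z - be) - sqrt (z - be) / sqrt (z + al)) *
                / sqrt (t ^ 2 - z ^ 2) * / sqrt (z ^ 2 + 4)).
  unfold Rdiv; ring.
  rewrite diff_key by lra. replace (z + al - (z - be)) with (be + al) by ring.
  unfold Rdiv. rewrite !Rinv_mult. ring.
Qed.

Lemma g21_left al be t x : al + be > 0 -> al < x ->
  g2 al be t (- x) - g1 al be t (- x) = hq al be x / sqrt (t ^ 2 - x ^ 2).
Proof.
  intros hs hz. unfold g1, g2, hq.
  rewrite (Rabs_left1 (- x + al)) by lra. rewrite (Rabs_left1 (- x - be)) by lra.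
  replace (- (- x + al)) with (x - al) by ring. replace (- (- x - be)) with (x + be) by ring.
  replace ((- x) ^ 2) with (x ^ 2) by ring.
  assert (0 < sqrt (x ^ 2 + 4)) by (apply sqrt_lt_R0; pose proof (pow2_ge_0 x); lra).
  assert (0 < sqrt (x - al)) by (apply sqrt_lt_R0; lra).
  assert (0 < sqrt (x + be)) by (apply sqrt_lt_R0; lra).
  transitivity ((sqrt (x + be) / sqrt (x - al) - sqrt (x - al) / sqrt (x + be)) *
                / sqrt (t ^ 2 - x ^ 2) * / sqrt (x ^ 2 + 4)).
  unfold Rdiv; ring.
  rewrite diff_key by lra. replace (x + be - (x - al)) with (al + be) by ring.
  unfold Rdiv. rewrite !Rinv_mult. ring.
Qed.

Lemma inv_nonneg x : 0 <= x -> 0 <= / x.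
Proof.
  intros h. destruct (Req_dec x 0) as [->|n]. rewrite Rinv_0; lra.
  left; apply Rinv_0_lt_compat; lra.
Qed.

Lemma g2_nonneg al be t z : 0 <= g2 al be t z.
Proof.
  unfold g2, Rdiv. repeat apply Rmult_le_pos; try apply sqrt_pos;
  apply inv_nonneg; apply sqrt_pos.
Qed.

Lemma g1_nonneg al be t z : 0 <= g1 al be t z.
Proof.
  unfold g1, Rdiv. repeat apply Rmult_le_pos; try apply sqrt_pos;
  apply inv_nonneg; apply sqrt_pos.
Qed.

Lemma low3 al be t z : al + be > 0 -> -t < z -> z < - Rabs al - 1 ->
  / (2 - z) <= t * g2 al be t z.
Proof.
  intros hs h1 h2. pose proof (Rle_abs al). pose proof (Rle_abs (- al)).
  rewrite Rabs_Ropp in H0. pose proof (Rabs_pos al).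
  unfold g2. rewrite (Rabs_left1 (z - be)) by lra. rewrite (Rabs_left1 (z + al)) by lra.
  replace (- (z - be)) with (be - z) by ring. replace (- (z + al)) with (- al - z) by ring.
  pose proof (pow2_ge_0 z).
  set (S := sqrt (t ^ 2 - z ^ 2)). set (A := sqrt (z ^ 2 + 4)).
  set (X := sqrt (be - z)). set (Y := sqrt (- al - z)).
  assert (pS : 0 < S) by (apply sqrt_lt_R0; nra).
  assert (St : S <= t).
  { apply Rle_trans with (sqrt (t ^ 2)). apply sqrt_le_1; nra. rewrite sqrt_pow2; lra. }
  assert (pA : 0 < A) by (apply sqrt_lt_R0; lra).
  assert (A2 : A <= 2 - z).
  { apply Rle_trans with (sqrt ((2 - z) ^ 2)). apply sqrt_le_1; nra. rewrite sqrt_pow2; lra. }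
  assert (pY : 0 < Y) by (apply sqrt_lt_R0; lra).
  assert (YX : Y <= X) by (apply sqrt_le_1; lra).
  replace (t * (X / Y / S / A)) with ((X / Y) * (t / S) * / A) by (field; lra).
  assert (1 <= X / Y). { apply Rmult_le_reg_r with Y; auto. unfold Rdiv.
    rewrite Rmult_assoc, Rinv_l, Rmult_1_r by lra. lra. }
  assert (1 <= t / S). { apply Rmult_le_reg_r with S; auto. unfold Rdiv.
    rewrite Rmult_assoc, Rinv_l, Rmult_1_r by lra. lra. }
  assert (/ (2 - z) <= / A) by (apply Rinv_le_contravar; lra).
  assert (0 < / (2 - z)) by (apply Rinv_0_lt_compat; lra).
  assert (1 <= X / Y * (t / S)) by nra. nra.
Qed.

Theorem mainTheorem8 (alpha beta : R) (I1 I2 I3 J1 J2 J3 : R -> R)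
  (Hab : alpha < beta) (Hsum : alpha + beta > 0)
  (HI1 : forall tau, alpha < tau -> beta < tau ->
           improper_int (g1 alpha beta tau) (- tau) (- alpha) (I1 tau))
  (HI2 : forall tau, alpha < tau -> beta < tau ->
           improper_int (g1 alpha beta tau) (- alpha) beta (I2 tau))
  (HI3 : forall tau, alpha < tau -> beta < tau ->
           improper_int (g1 alpha beta tau) beta tau (I3 tau))
  (HJ1 : forall tau, alpha < tau -> beta < tau ->
           improper_int (g2 alpha beta tau) (- tau) (- alpha) (J1 tau))
  (HJ2 : forall tau, alpha < tau -> beta < tau ->
           improper_int (g2 alpha beta tau) (- alpha) beta (J2 tau))
  (HJ3 : forall tau, alpha < tau -> beta < tau ->
           improper_int (g2 alpha beta tau) beta tau (J3 tau)) :
  (exists LI LJ,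
      improper_int (fun z => 1 / sqrt (z ^ 2 + 4) * sqrt ((alpha + z) / (beta - z)))
        (- alpha) beta LI /\
      improper_int (fun z => 1 / sqrt (z ^ 2 + 4) * sqrt ((beta - z) / (alpha + z)))
        (- alpha) beta LJ /\
      tends_at_pinf (fun tau => tau * I2 tau) LI /\
      tends_at_pinf (fun tau => tau * J2 tau) LJ /\
      LI < LJ) /\
  (exists L1 L3,
      improper_int_ninf
        (fun z => (alpha + beta) / (sqrt (z ^ 2 + 4) * sqrt (beta - z) * sqrt (- alpha - z)))
        (- alpha) L1 /\
      improper_int_pinf
        (fun z => (alpha + beta) / (sqrt (z ^ 2 + 4) * sqrt (z - beta) * sqrt (z + alpha)))
        beta L3 /\
      tends_at_pinf (fun tau => tau * (I1 tau - J1 tau)) (- L1) /\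
      tends_at_pinf (fun tau => tau * (I3 tau - J3 tau)) L3 /\
      L1 <> 0 /\ L3 <> 0) /\
  diverges_pinf (fun tau => tau * (J1 tau + J3 tau)).
Proof.
  split; [|split].
  -
    set (K2 := alpha ^ 2 + beta ^ 2). set (T0 := alpha ^ 2 + beta ^ 2 + 2).
    assert (hT : forall t, T0 < t -> alpha < t /\ beta < t).
    { intros t ht. unfold T0 in ht. split; nra. }
    assert (hz : forall z, - alpha < z < beta -> z ^ 2 < K2).
    { intros z Hz. unfold K2. destruct (Rle_or_lt 0 z); nra. }
    assert (hK : K2 < T0 * T0) by (unfold K2, T0; nra).
    assert (hK0 : 0 <= K2) by (unfold K2; nra).
    assert (hT0 : 0 < T0) by (unfold T0; nra).
    destruct (part_i (fI alpha beta) (- alpha) beta K2 T0 I2) as [LI [HLI TI]]; auto; try lra.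
    { intros; apply fI_ex; lra. }
    { intros z Hz. unfold fI. apply Rmult_le_pos; [|apply sqrt_pos].
      unfold Rdiv; rewrite Rmult_1_l. apply inv_nonneg, sqrt_pos. }
    { intros t ht. destruct (hT t ht). eapply imp_ext; [| apply imp_of; apply HI2; auto].
      intros z Hz. apply g1_I2; auto. }
    destruct (part_i (fJ alpha beta) (- alpha) beta K2 T0 J2) as [LJ [HLJ TJ]]; auto; try lra.
    { intros; apply fJ_ex; lra. }
    { intros z Hz. unfold fJ. apply Rmult_le_pos; [|apply sqrt_pos].
      unfold Rdiv; rewrite Rmult_1_l. apply inv_nonneg, sqrt_pos. }
    { intros t ht. destruct (hT t ht). eapply imp_ext; [| apply imp_of; apply HJ2; auto].
      intros z Hz. apply g2_J2; auto. }
    exists LI, LJ. split; [|split; [|split; [|split]]].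
    + exact (of_imp _ _ _ _ HLI).
    + exact (of_imp _ _ _ _ HLJ).
    + exact TI.
    + exact TJ.
    + apply (cmp alpha beta); auto.
  -
    destruct (core alpha beta (fun t => J1 t - I1 t)) as [L1 [HP1 [pL1 T1]]]; [lra| |].
    { intros t hb ha.
      assert (G := imp_minus _ _ _ _ _ _ (imp_of _ _ _ _ (HJ1 t ha hb)) (imp_of _ _ _ _ (HI1 t ha hb))).
      apply imp_refl in G. rewrite !Ropp_involutive in G.
      eapply imp_ext; [| exact G]. intros x Hx. apply g21_left; lra. }
    destruct (core beta alpha (fun t => I3 t - J3 t)) as [L3 [HP3 [pL3 T3]]]; [lra| |].
    { intros t ha hb.
      assert (G := imp_minus _ _ _ _ _ _ (imp_of _ _ _ _ (HI3 t ha hb)) (imp_of _ _ _ _ (HJ3 t ha hb))).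
      eapply imp_ext; [| exact G]. intros x Hx. apply g12_right; lra. }
    exists L1, L3. split; [|split; [|split; [|split; [|split]]]].
    + apply (ninf_of_pinf (hq alpha beta)); auto. intros z Hz. unfold hq.
      replace ((- z) ^ 2) with (z ^ 2) by ring.
      replace (- z - alpha) with (- alpha - z) by ring.
      replace (- z + beta) with (beta - z) by ring. f_equal. ring.
    + apply of_pinf. unfold hq in HP3. rewrite Rplus_comm. exact HP3.
    + intros eps He. destruct (T1 eps He) as [T HT]. exists T. intros x Hx.
      specialize (HT x Hx).
      replace (x * (I1 x - J1 x) - - L1) with (- (x * (J1 x - I1 x) - L1)) by ring.
      rewrite Rabs_Ropp. exact HT.
    + exact T3.
    + lra.
    + lra.
  -
    intros M.
    set (X := M + ln (3 + Rabs alpha)).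
    exists (2 * exp X + 2 * Rabs alpha + 2 + Rabs beta + 2).
    intros t ht.
    pose proof (Rabs_pos alpha). pose proof (Rle_abs alpha). pose proof (Rle_abs (- alpha)).
    rewrite Rabs_Ropp in H1. pose proof (Rabs_pos beta). pose proof (Rle_abs beta).
    pose proof (exp_pos X).
    assert (ha : alpha < t) by lra. assert (hb : beta < t) by lra.
    assert (IJ1 := imp_of _ _ _ _ (HJ1 t ha hb)).
    assert (IJ3 := imp_of _ _ _ _ (HJ3 t ha hb)).
    assert (J30 : 0 <= J3 t).
    { replace 0 with (RInt (g2 alpha beta t) ((beta + t) / 2) ((beta + t) / 2)).
      apply (imp_le_L _ beta t); auto; try lra. intros; apply g2_nonneg.
      apply (RInt_point (V:=R_CompleteNormedModule)). }
    set (c := - t / 2). set (d := - Rabs alpha - 1).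
    assert (hcd : c <= d) by (unfold c, d; lra).
    destruct (ln_prim c d hcd ltac:(unfold d; lra)) as [ex1 e1].
    assert (exg : ex_RInt (g2 alpha beta t) c d) by (apply (proj1 IJ1); unfold c, d; lra).
    assert (L1 : ln (2 - c) - ln (2 - d) <= t * J1 t).
    { rewrite <- e1. apply Rle_trans with (RInt (fun z => t * g2 alpha beta t z) c d).
      apply RInt_le; auto. apply ex_scalR; auto.
      intros z Hz. apply low3; unfold c, d in *; lra.
      rewrite RInt_scalR by auto. apply Rmult_le_compat_l; [lra|].
      apply (imp_le_L _ (- t) (- alpha)); auto; unfold c, d; try lra.
      intros; apply g2_nonneg. }
    assert (ln (2 - c) > X).
    { rewrite <- (ln_exp X). apply ln_increasing. apply exp_pos. unfold c; lra. }
    replace (2 - d) with (3 + Rabs alpha) in L1 by (unfold d; ring).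
    assert (0 <= t * J3 t) by (apply Rmult_le_pos; lra).
    unfold X in *. rewrite Rmult_plus_distr_l. lra.
Qed.
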